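(* Let $(P,Q)$ be a global solution of the Cucker–Smale model with velocity control described in the context. Then the following are equivalent: (1) $(P,Q)$ exhibits bi-cluster flocking; (2) there exists a partition $\{A,B\}$ of $[N]$ such that \[ \sup_{t\ge0}\max\{D_{Q,A}(t),D_{Q,B}(t)\}<\infty\quad\text{and}\quad\sup_{t\ge0}\min_{i\in A,\,j\in B}|q_i(t)-q_j(t)|=\infty. \]
   Context: Let $N\ge2$, $d\ge1$, $\kappa>0$, $[N]=\{1,\dots,N\}$. The velocity control function $G:\mathbb R^d\to\mathbb R^d$ is $G(p)=g(|p|)\,p/|p|$ for $p\ne0$, $G(0)=0$, with $g\in C^1([0,\infty))$, $g(0)=0$, $0<m\le g'\le M$ on every compact interval (constants depending on the interval), and $g$ convex or concave on $(0,\infty)$. The kernel $\psi:(0,\infty)\to(0,\infty)$ is bounded, Lipschitz continuous and nonincreasing. The model is, for $i\in[N]$, $t>0$: \[ \dot q_i=G(p_i),\qquad \dot p_i=\frac{\kappa}{N}\sum_{k=1}^N\psi(|q_k-q_i|)\big(G(p_k)-G(p_i)\big),\qquad (q_i,p_i)(0)=(q_i^0,p_i^0)\in\mathbb R^d\times\mathbb R^d. \] For $S\subset[N]$: $D_{Q,S}(t)=\max_{i,j\in S}|q_i(t)-q_j(t)|$, $D_{P,S}(t)=\max_{i,j\in S}|p_i(t)-p_j(t)|$. The solution exhibits bi-cluster flocking if there is a nonempty proper subset $S\subset[N]$ with $\sup_{t\ge0}\max\{D_{Q,S}(t),D_{Q,[N]\setminus S}(t)\}<\infty$, $\sup_{t\ge0}\min_{i\in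 S,\,j\notin S}|q_i(t)-q_j(t)|=\infty$, and $\lim_{t\to\infty}D_{P,S}(t)=\lim_{t\to\infty}D_{P,[N]\setminus S}(t)=0$. *)

(* Defs.v *)
From HB Require Import structures.
From mathcomp Require Import all_boot all_order all_algebra.
From mathcomp Require Import all_classical all_reals all_analysis.
Set Implicit Arguments. Unset Strict Implicit. Unset Printing Implicit Defensive.
Import Order.TTheory GRing.Theory Num.Theory.
Import numFieldNormedType.Exports.

Local Open Scope classical_set_scope.
Local Open Scope ring_scope.

Definition enorm (R : realType) (d : nat) (x : 'I_d -> R) : R :=
  Num.sqrt (\sum_(k < d) x k ^+ 2).

Definition Gctrl (R : realType) (g : R -> R) (d : nat) (p : 'I_d -> R) : 'I_d -> R :=
  fun k => if enorm p == 0 then 0 else g (enorm p) / enorm p * p k.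

Definition pdist (R : realType) (N d : nat) (x : R -> 'I_N -> 'I_d -> R)
  (i j : 'I_N) (t : R) : R := enorm (fun k => x t i k - x t j k).

Definition Ddiam (R : realType) (N d : nat) (x : R -> 'I_N -> 'I_d -> R)
  (S : {set 'I_N}) (t : R) : R :=
  \big[Order.max/0]_(i in S) \big[Order.max/0]_(j in S) pdist x i j t.

Definition convex_pos (R : realType) (g : R -> R) : Prop :=
  forall x y l : R, 0 < x -> 0 < y -> 0 <= l <= 1 ->
    g (l * x + (1 - l) * y) <= l * g x + (1 - l) * g y.
Definition concave_pos (R : realType) (g : R -> R) : Prop :=
  forall x y l : R, 0 < x -> 0 < y -> 0 <= l <= 1 ->
    l * g x + (1 - l) * g y <= g (l * x + (1 - l) * y).

Definition admissible_g (R : realType) (g : R -> R) : Prop :=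
  [/\ (forall s : R, 0 <= s -> derivable g s 1),
      {within [set s : R | 0 <= s]%classic, continuous derive1 g},
      g 0 = 0,
      (forall a : R, 0 < a -> exists m M : R, 0 < m /\
          forall s : R, 0 <= s <= a -> m <= derive1 g s <= M)
    & convex_pos g \/ concave_pos g].

(* standing assumptions on psi (on [0,oo), i.e. psi(0) is the continuous
   extension of the kernel to 0) *)
Definition admissible_psi (R : realType) (psi : R -> R) : Prop :=
  [/\ (forall r : R, 0 <= r -> 0 < psi r),
      (exists C : R, forall r : R, 0 <= r -> psi r <= C),
      (exists L : R, forall r s : R, 0 <= r -> 0 <= s ->
          `|psi r - psi s| <= L * `|r - s|)
    & (forall r s : R, 0 <= r -> r <= s -> psi s <= psi r)].

Definition CS_solution (R : realType) (N d : nat) (kappa : R) (g psi : R -> R)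
  (q p : R -> 'I_N -> 'I_d -> R) : Prop :=
  [/\ (forall i k, {within [set t : R | 0 <= t]%classic, continuous (fun t => q t i k)}),
      (forall i k, {within [set t : R | 0 <= t]%classic, continuous (fun t => p t i k)}),
      (forall (i : 'I_N) (k : 'I_d) (t : R), 0 < t ->
          derivable (fun s => q s i k) t 1 /\
          derive1 (fun s => q s i k) t = Gctrl g (p t i) k)
    & (forall (i : 'I_N) (k : 'I_d) (t : R), 0 < t ->
          derivable (fun s => p s i k) t 1 /\
          derive1 (fun s => p s i k) t =
            kappa / N%:R * \sum_(j < N) psi (pdist q j i t) *
              (Gctrl g (p t j) k - Gctrl g (p t i) k))].

Definition bicluster_flocking (R : realType) (N d : nat)
  (q p : R -> 'I_N -> 'I_d -> R) : Prop :=
  exists S : {set 'I_N}, [/\ S != finset.set0, S != [set: 'I_N]%SET,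
    ((exists C : R, forall t : R, 0 <= t ->
        Order.max (Ddiam q S t) (Ddiam q (~: S) t) <= C) /\
     (forall M : R, exists t : R, 0 <= t /\
        forall i j, i \in S -> j \notin S -> M < pdist q i j t)),
    (Ddiam p S t @[t --> +oo] --> 0)
  & (Ddiam p (~: S) t @[t --> +oo] --> 0)].

(* Main.v *)
Require Import Defs.
From HB Require Import structures.
From mathcomp Require Import all_boot all_order all_algebra.
From mathcomp Require Import all_classical all_reals all_analysis.
From mathcomp Require Import ring lra.
Set Implicit Arguments. Unset Strict Implicit. Unset Printing Implicit Defensive.
Import Order.TTheory GRing.Theory Num.Theory.
Import numFieldNormedType.Exports.
Local Open Scope classical_set_scope.
Local Open Scope ring_scope.
Definition dotv (R : realType) (d : nat) (x y : 'I_d -> R) : R := \sum_(k < d) x k * y k.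

Lemma enormE (R : realType) (d : nat) (x : 'I_d -> R) : enorm x = Num.sqrt (dotv x x).
Proof. by rewrite /enorm /dotv; congr Num.sqrt; apply: eq_bigr => k _; rewrite expr2. Qed.

Lemma dotv_ge0 (R : realType) (d : nat) (x : 'I_d -> R) : 0 <= dotv x x.
Proof. by apply: sumr_ge0 => k _; rewrite -expr2 sqr_ge0. Qed.

Lemma enorm_ge0 (R : realType) (d : nat) (x : 'I_d -> R) : 0 <= enorm x.
Proof. exact: sqrtr_ge0. Qed.

Lemma enorm_sq (R : realType) (d : nat) (x : 'I_d -> R) : enorm x ^+ 2 = dotv x x.
Proof. by rewrite enormE sqr_sqrtr // dotv_ge0. Qed.

Lemma comp_le_enorm (R : realType) (d : nat) (x : 'I_d -> R) k : `|x k| <= enorm x.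
Proof.
rewrite -(@ler_pXn2r _ 2%N) //= ?nnegrE ?enorm_ge0 // enorm_sq real_normK ?num_real //.
rewrite /dotv (bigD1 k) //= -expr2 lerDl; apply: sumr_ge0 => i _; rewrite -expr2 sqr_ge0.
by [].
Qed.

Lemma enorm0_comp (R : realType) (d : nat) (x : 'I_d -> R) k : enorm x = 0 -> x k = 0.
Proof. by move=> h; apply/eqP; rewrite -normr_eq0 eq_le normr_ge0 -h comp_le_enorm. Qed.

Lemma dotv_CS (R : realType) (d : nat) (x y : 'I_d -> R) : dotv x y <= enorm x * enorm y.
Proof.
set a := enorm x; set b := enorm y.
have ha : 0 <= a := enorm_ge0 x. have hb : 0 <= b := enorm_ge0 y.
have key : 0 <= \sum_(k < d) (b * x k - a * y k) ^+ 2 by apply: sumr_ge0 => k _; rewrite sqr_ge0.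
have E : \sum_(k < d) (b * x k - a * y k) ^+ 2 = b^+2 * dotv x x - 2 * a * b * dotv x y + a^+2 * dotv y y.
  rewrite /dotv !mulr_sumr -sumrN -!big_split /=; apply: eq_bigr => k _.
  by rewrite -!mulrA; ring.
rewrite E -!enorm_sq -/a -/b in key.
have [a0|apos] := eqVneq a 0.
  rewrite a0 mul0r /dotv big1 // => k _.
  by rewrite (enorm0_comp k a0) mul0r.
have [b0|bpos] := eqVneq b 0.
  rewrite b0 mulr0 /dotv big1 // => k _.
  by rewrite (enorm0_comp k b0) mulr0.
have abp : 0 < a * b by rewrite mulr_gt0 // lt_def ?apos ?bpos.
nra.
Qed.

Lemma enormN (R : realType) (d : nat) (x : 'I_d -> R) : enorm (fun k => - x k) = enorm x.
Proof. by rewrite /enorm; congr Num.sqrt; apply: eq_bigr => k _; rewrite sqrrN. Qed.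

Lemma dot_mono (R : realType) (g : R -> R) (d : nat) (m Rb : R) (x y : 'I_d -> R) :
  0 <= m -> g 0 = 0 ->
  (forall a b, 0 <= a <= Rb -> 0 <= b <= Rb -> m * (a - b) ^+ 2 <= (a - b) * (g a - g b)) ->
  enorm x <= Rb -> enorm y <= Rb ->
  m * dotv (fun k => x k - y k) (fun k => x k - y k) <=
  dotv (fun k => x k - y k) (fun k => Gctrl g x k - Gctrl g y k).
Proof.
move=> m0 g0 hg xR yR.
set a := enorm x; set b := enorm y.
have a0 : 0 <= a := enorm_ge0 x. have b0 : 0 <= b := enorm_ge0 y.
set ha := if a == 0 then 0 else g a / a.
set hb := if b == 0 then 0 else g b / b.
have Gx : forall k, Gctrl g x k = ha * x k.
  by move=> k; rewrite /Gctrl /ha -/a; case: eqP => _; rewrite ?mul0r.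
have Gy : forall k, Gctrl g y k = hb * y k.
  by move=> k; rewrite /Gctrl /hb -/b; case: eqP => _; rewrite ?mul0r.
have haa : ha * a = g a.
  rewrite /ha; case: eqP => [->|an]; first by rewrite mul0r g0.
  by rewrite divfK //; apply/eqP.
have hbb : hb * b = g b.
  rewrite /hb; case: eqP => [->|bn]; first by rewrite mul0r g0.
  by rewrite divfK //; apply/eqP.
set c := dotv x y.
have E1 : dotv (fun k => x k - y k) (fun k => x k - y k) = a ^+ 2 - 2 * c + b ^+ 2.
  rewrite /a /b !enorm_sq /c /dotv !mulr_sumr -sumrN -!big_split /=.
  by apply: eq_bigr => k _; ring.
have E2 : dotv (fun k => x k - y k) (fun k => Gctrl g x k - Gctrl g y k) =
    ha * a ^+ 2 - (ha + hb) * c + hb * b ^+ 2.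
  rewrite /a /b !enorm_sq /c /dotv !mulr_sumr -sumrN -!big_split /=.
  by apply: eq_bigr => k _; rewrite Gx Gy; ring.
rewrite E1 E2.
have cs1 : c <= a * b := dotv_CS x y.
have cs2 : - c <= a * b.
  have := dotv_CS (fun k => - x k) y; rewrite enormN.
  suff -> : dotv (fun k => - x k) y = - c by [].
  by rewrite /c /dotv -sumrN; apply: eq_bigr => k _; rewrite mulNr.
have hgb : m * b ^+ 2 <= b * g b.
  have /= := hg 0 b ltac:(by rewrite lexx (le_trans a0 xR)) ltac:(by rewrite b0 yR).
  by rewrite g0 !sub0r sqrrN mulrNN.
have hga : m * a ^+ 2 <= a * g a.
  have /= := hg a 0 ltac:(by rewrite a0 xR) ltac:(by rewrite lexx (le_trans a0 xR)).
  by rewrite g0 !subr0.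
have [az|anz] := eqVneq a 0.
  have hz : ha = 0 by rewrite /ha az eqxx.
  have cz : c = 0 by move: cs1 cs2; rewrite az mul0r; lra.
  rewrite hz cz az; rewrite -hbb in hgb; nra.
have [bz|bnz] := eqVneq b 0.
  have hz : hb = 0 by rewrite /hb bz eqxx.
  have cz : c = 0 by move: cs1 cs2; rewrite bz mulr0; lra.
  rewrite hz cz bz; rewrite -haa in hga; nra.
have ap : 0 < a by rewrite lt_def anz a0.
have bp : 0 < b by rewrite lt_def bnz b0.
have ham : m <= ha.
  rewrite -haa in hga; have : m * a <= ha * a by nra.
  by rewrite ler_pM2r.
have hbm : m <= hb.
  rewrite -hbb in hgb; have : m * b <= hb * b by nra.
  by rewrite ler_pM2r.
have hab := hg a b ltac:(by rewrite a0 xR) ltac:(by rewrite b0 yR).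
rewrite -haa -hbb in hab.
have k1 : 0 <= (ha + hb - 2 * m) * (a * b - c) by apply: mulr_ge0; lra.
rewrite -subr_ge0.
have -> : ha * a ^+ 2 - (ha + hb) * c + hb * b ^+ 2 - m * (a ^+ 2 - 2 * c + b ^+ 2) =
  (ha + hb - 2 * m) * (a * b - c) + ((a - b) * (ha * a - hb * b) - m * (a - b) ^+ 2) by ring.
rewrite addr_ge0 // subr_ge0 //.
Qed.
Lemma mvt_gen (R : realType) (f : R -> R) (x y : R) :
  (forall s, x <= s <= y -> derivable f s 1) -> x <= y ->
  exists c, [/\ x <= c, c <= y & f y - f x = derive1 f c * (y - x)].
Proof.
move=> hd xy.
have h1 : forall s, s \in `]x, y[%R -> is_derive s 1 f (derive1 f s).
  move=> s; rewrite in_itv /= => /andP[u1 u2].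
  rewrite derive1E; apply: derivableP; apply: hd; rewrite !ltW //.
have h2 : {within `[x, y], continuous f}.
  apply: continuous_in_subspaceT => s; rewrite inE /= in_itv /= => /andP[u1 u2].
  by apply: differentiable_continuous; apply/derivable1_diffP; apply: hd; rewrite u1 u2.
have [c cI E] := @MVT_segment R f (derive1 f) x y xy h1 h2.
by exists c; move: cI; rewrite in_itv /= => /andP[? ?].
Qed.

Lemma g_strong (R : realType) (g : R -> R) (Rb : R) :
  admissible_g g -> 0 < Rb ->
  exists m : R, 0 < m /\ forall a b, 0 <= a <= Rb -> 0 <= b <= Rb ->
    m * (a - b) ^+ 2 <= (a - b) * (g a - g b).
Proof.
case=> hder _ g0 hm _ Rbp.
have [m [M [mpos hmM]]] := hm Rb Rbp.
exists m; split => //.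
have side : forall a b, 0 <= a <= Rb -> 0 <= b <= Rb -> a <= b ->
    m * (a - b) ^+ 2 <= (a - b) * (g a - g b).
  move=> a b /andP[a0 aR] /andP[b0 bR] ab.
  have [c [ac cb E]] := @mvt_gen R g a b (fun s hs => hder s (le_trans a0 (proj1 (andP hs)))) ab.
  have /andP[mc _] : m <= derive1 g c <= M by apply: hmM; rewrite (le_trans a0 ac) (le_trans cb bR).
  have -> : (a - b) * (g a - g b) = (b - a) * (g b - g a) by ring.
  rewrite E.
  have : 0 <= (b - a) ^+ 2 by rewrite sqr_ge0.
  have -> : (a - b) ^+ 2 = (b - a) ^+ 2 by ring.
  nra.
move=> a b ha hb; have [ab|ba] := leP a b; first exact: side.
have := side b a hb ha (ltW ba).
have -> : (b - a) ^+ 2 = (a - b) ^+ 2 by ring.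
by have -> : (b - a) * (g b - g a) = (a - b) * (g a - g b) by ring.
Qed.

Lemma g_facts (R : realType) (g : R -> R) :
  admissible_g g ->
  (forall a b, 0 <= a -> a <= b -> g a <= g b) /\ (forall a, 0 <= a -> 0 <= g a).
Proof.
move=> hg.
have mono : forall a b, 0 <= a -> a <= b -> g a <= g b.
  move=> a b a0 ab.
  have b1 : 0 < b + 1 by lra.
  have [m [mpos hm]] := @g_strong R g (b + 1) hg b1.
  have := hm a b ltac:(apply/andP; split; lra) ltac:(apply/andP; split; lra).
  have [->|ab'] := eqVneq a b; first by rewrite lexx.
  have : a < b by rewrite lt_def eq_sym ab' ab.
  move=> ab2 h.
  have : 0 <= (a - b) ^+ 2 by rewrite sqr_ge0.
  nra.
split => // a a0; case: hg => _ _ g0 _ _; rewrite -g0; exact: mono.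
Qed.
Lemma barbalat (R : realType) (L f : R -> R) (a c K : R) :
  0 < c ->
  (forall t, a < t -> derivable L t 1) ->
  (forall t, a < t -> derive1 L t <= - (c * f t)) ->
  (forall t, a < t -> 0 <= L t) ->
  (forall t, a < t -> 0 <= f t) ->
  (forall t, a < t -> derivable f t 1) ->
  (forall t, a < t -> `|derive1 f t| <= K) ->
  forall e, 0 < e -> exists T, forall t, T <= t -> f t < e.
Proof.
move=> cpos hL hL' hL0 hf0 hf hf' e epos.
have [//|H] := pselect (exists T, forall t, T <= t -> f t < e).
have H' : forall T, exists t, T <= t /\ e <= f t.
  move=> T; move/forallNP: H => /(_ T) /existsNP [t] /not_implyP [Tt ft].
  by exists t; split => //; rewrite leNgt; apply/negP.
exfalso.
set K' := `|K| + 1.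
have K'p : 0 < K' by rewrite /K'; have := normr_ge0 K; lra.
have hf'' : forall t, a < t -> - K' <= derive1 f t.
  move=> t at_; have := hf' t at_; rewrite ler_norml => /andP[h _].
  have := ler_norm K; rewrite /K'; lra.
set dl := e / (2 * K').
have dlp : 0 < dl by rewrite /dl divr_gt0 // mulr_gt0.
have dlK : K' * dl = e / 2.
  rewrite /dl; field; rewrite gt_eqF //.
have Lnin : forall x y, a < x -> x <= y -> L y <= L x.
  move=> x y ax xy.
  have [z [xz zy E]] := @mvt_gen R L x y (fun s hs => hL s (lt_le_trans ax (proj1 (andP hs)))) xy.
  have az : a < z by apply: lt_le_trans xz.
  have := hL' z az; have := hf0 z az.
  have : 0 <= y - x by rewrite subr_ge0.
  move: E; set D := derive1 L z => E yx fz hD.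
  have D0 : D <= 0 by have := mulr_ge0 (ltW cpos) fz; lra.
  have : D * (y - x) <= 0 by rewrite mulr_le0_ge0.
  lra.
set eta := c * (e / 2) * dl.
have etap : 0 < eta.
  rewrite /eta; apply: mulr_gt0 => //; apply: mulr_gt0 => //; lra.
have step : forall s, a < s -> e <= f s -> L (s + dl) <= L s - eta.
  move=> s a_s es.
  have fbig : forall u, s <= u -> u <= s + dl -> e / 2 <= f u.
    move=> u su us.
    have [z [sz zu E]] := @mvt_gen R f s u (fun w hw => hf w (lt_le_trans a_s (proj1 (andP hw)))) su.
    have := hf'' z (lt_le_trans a_s sz).
    have : 0 <= u - s by rewrite subr_ge0.
    have : u - s <= dl by lra.
    move: E dlK; set D := derive1 f z; nra.
  have sdl : s <= s + dl by lra.
  have [z [sz zu E]] := @mvt_gen R L s (s + dl) (fun w hw => hL w (lt_le_trans a_s (proj1 (andP hw)))) sdl.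
  have := hL' z (lt_le_trans a_s sz).
  have := fbig z sz zu.
  have hd : s + dl - s = dl by ring.
  rewrite hd in E.
  move: E; rewrite /eta; set D := derive1 L z => E fz hD.
  have h1 : c * (e / 2) <= c * f z by rewrite ler_pM2l.
  have h2 : D <= - (c * (e / 2)) by lra.
  have : D * dl <= - (c * (e / 2)) * dl by rewrite ler_pM2r.
  lra.
have ind : forall n : nat, exists t, a + 1 <= t /\ L t <= L (a + 1) - n%:R * eta.
  elim=> [|n [t [at_ Lt]]].
    by exists (a + 1); split => //; rewrite mul0r subr0.
  have [s [ts es]] := H' t.
  have a_s : a < s by lra.
  exists (s + dl); split; first by lra.
  have := step s a_s es; have := Lnin t s ltac:(lra) ts.
  rewrite -natr1; lra.
have La0 : 0 <= L (a + 1) / eta by rewrite divr_ge0 // ?(ltW etap) // hL0 //; lra.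
have := archi_boundP La0; set n := Num.Def.archi_bound _ => hn.
have [t [at_ Lt]] := ind n.
have := hL0 t ltac:(lra).
rewrite ltr_pdivrMr // in hn.
lra.
Qed.
Lemma is_derive1E (R : realType) (f : R -> R) (t df : R) :
  is_derive t 1 f df -> derivable f t 1 /\ derive1 f t = df.
Proof. by move=> H; rewrite derive1E; split; [exact: ex_derive | exact: derive_val]. Qed.

Lemma is_derive_sumf (R : realType) (n : nat) (F : 'I_n -> R -> R) (dF : 'I_n -> R) (t : R) :
  (forall i, is_derive t 1 (F i) (dF i)) ->
  is_derive t 1 (fun s => \sum_(i < n) F i s) (\sum_(i < n) dF i).
Proof.
move=> H; have -> : (fun s => \sum_(i < n) F i s) = \sum_(i < n) F i by rewrite fct_sumE.
exact: is_derive_sum.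
Qed.

Lemma is_derive_sq (R : realType) (F : R -> R) (dF t : R) :
  is_derive t 1 F dF -> is_derive t 1 (fun s => F s ^+ 2) (2 * F t * dF).
Proof.
move=> H; have -> : (fun s => F s ^+ 2) = F * F.
  by rewrite mulrfctE; apply/funext => s; rewrite expr2.
apply: (is_derive_eq (is_deriveM H H)).
rewrite /GRing.scale /=; ring.
Qed.

Lemma energy_identity (R : realType) (N d : nat) (P Gv : 'I_N -> 'I_d -> R)
  (w : 'I_N -> 'I_N -> R) (kN : R) :
  (forall i j, w i j = w j i) ->
  \sum_(i < N) \sum_(k < d) 2 * P i k * (kN * \sum_(j < N) w j i * (Gv j k - Gv i k)) =
  - kN * \sum_(i < N) \sum_(j < N) w j i *
      dotv (fun k => P i k - P j k) (fun k => Gv i k - Gv j k).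
Proof.
move=> wsym.
set X := fun i j => \sum_(k < d) P i k * (Gv j k - Gv i k).
have E1 : forall i, \sum_(k < d) 2 * P i k * (kN * \sum_(j < N) w j i * (Gv j k - Gv i k))
    = 2 * kN * \sum_(j < N) w j i * X i j.
  move=> i.
  transitivity (\sum_(k < d) \sum_(j < N) 2 * kN * (w j i * (P i k * (Gv j k - Gv i k)))).
    by apply: eq_bigr => k _; rewrite !mulr_sumr; apply: eq_bigr => j _; ring.
  rewrite exchange_big /= mulr_sumr; apply: eq_bigr => j _.
  by rewrite /X mulr_sumr mulr_sumr; apply: eq_bigr => k _; ring.
rewrite (eq_bigr _ (fun i _ => E1 i)) -mulr_sumr.
set T := \sum_(i < N) \sum_(j < N) w j i * X i j.
have Tsym : T = \sum_(i < N) \sum_(j < N) w j i * X j i.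
  rewrite /T exchange_big /=; apply: eq_bigr => i _; apply: eq_bigr => j _.
  by rewrite wsym.
have E2 : T + T = \sum_(i < N) \sum_(j < N) w j i *
      - dotv (fun k => P i k - P j k) (fun k => Gv i k - Gv j k).
  rewrite {2}Tsym /T -big_split /=; apply: eq_bigr => i _.
  rewrite -big_split /=; apply: eq_bigr => j _.
  rewrite -mulrDr; congr (_ * _).
  by rewrite /X /dotv -sumrN -big_split /=; apply: eq_bigr => k _; ring.
have -> : 2 * kN * T = kN * (T + T) by ring.
rewrite E2 mulNr -mulrN; congr (_ * _).
rewrite -sumrN; apply: eq_bigr => i _; rewrite -sumrN; apply: eq_bigr => j _.
by rewrite mulrN.
Qed.

Lemma pdist_sym (R : realType) (N d : nat) (x : R -> 'I_N -> 'I_d -> R) i j t :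
  pdist x i j t = pdist x j i t.
Proof.
rewrite /pdist -enormN; congr enorm; apply/funext => k; by rewrite opprB.
Qed.

Lemma pdist_le_Ddiam (R : realType) (N d : nat) (x : R -> 'I_N -> 'I_d -> R) (S : {set 'I_N}) i j t :
  i \in S -> j \in S -> pdist x i j t <= Ddiam x S t.
Proof.
move=> hi hj; rewrite /Ddiam.
apply: le_trans (le_bigmax_cond _ _ hi).
exact: (le_bigmax_cond _ (fun j => pdist x i j t) hj).
Qed.

Lemma pdist_ge0 (R : realType) (N d : nat) (x : R -> 'I_N -> 'I_d -> R) i j t :
  0 <= pdist x i j t.
Proof. exact: enorm_ge0. Qed.

Lemma Gctrl_bound (R : realType) (g : R -> R) (d : nat) (x : 'I_d -> R) k Rb :
  admissible_g g -> enorm x <= Rb -> `|Gctrl g x k| <= g Rb.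
Proof.
move=> hg xR; have [gmono gpos] := g_facts hg.
have a0 := enorm_ge0 x.
rewrite /Gctrl; case: eqP => [_|nz]; first by rewrite normr0 gpos // (le_trans a0).
have ap : 0 < enorm x by rewrite lt_def a0 andbT; apply/eqP.
rewrite normrM ger0_norm; last by rewrite divr_ge0 // gpos.
apply: le_trans (gmono _ _ a0 xR).
have := comp_le_enorm x k.
have : 0 <= g (enorm x) / enorm x by rewrite divr_ge0 // gpos.
move=> h1 h2.
apply: le_trans (ler_wpM2l h1 h2) _.
by rewrite divfK // gt_eqF.
Qed.

Lemma g_monoprod (R : realType) (g : R -> R) a b :
  admissible_g g -> 0 <= a -> 0 <= b -> 0 <= (a - b) * (g a - g b).
Proof.
move=> hg a0 b0; have [gmono _] := g_facts hg.
have [ab|ba] := leP a b.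
  apply: mulr_le0; rewrite subr_le0; first exact: ab.
  exact: gmono.
apply: mulr_ge0; rewrite subr_ge0; first exact: ltW.
by apply: gmono => //; apply: ltW.
Qed.

Lemma is_derive_sub (R : realType) (F G : R -> R) (dF dG t : R) :
  is_derive t 1 F dF -> is_derive t 1 G dG -> is_derive t 1 (fun s => F s - G s) (dF - dG).
Proof. move=> h1 h2; exact: (is_deriveB h1 h2). Qed.

Lemma sum2_ge_term (R : realType) (N : nat) (F : 'I_N -> 'I_N -> R) a b :
  (forall i j, 0 <= F i j) -> F a b <= \sum_(i < N) \sum_(j < N) F i j.
Proof.
move=> h; rewrite (bigD1 a) //= (bigD1 b) //= -addrA lerDl.
by apply: addr_ge0; apply: sumr_ge0 => i _; [|apply: sumr_ge0 => j _].
Qed.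

Lemma cluster_pair (R : realType) (N d : nat) (kappa : R) (g psi : R -> R)
  (q p : R -> 'I_N -> 'I_d -> R) (S : {set 'I_N}) (C : R) :
  (0 < N)%N -> 0 < kappa -> admissible_g g -> admissible_psi psi ->
  CS_solution kappa g psi q p ->
  (forall t, 0 <= t -> Ddiam q S t <= C) ->
  forall a b, a \in S -> b \in S -> forall e, 0 < e -> exists T, forall t, T <= t ->
    dotv (fun k => p t a k - p t b k) (fun k => p t a k - p t b k) < e.
Proof.
move=> N0 kpos hg hpsi [_ _ _ hp] hC.
have [gmono gpos] := g_facts hg.
have g0 : g 0 = 0 by case: hg.
case: hpsi => psipos [Cp hCp] _ psimono.
set kN := kappa / N%:R.
have kNp : 0 < kN by rewrite /kN divr_gt0 // ltr0n.
set Pd := fun t i k => kN * \sum_(j < N) psi (pdist q j i t) *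
   (Gctrl g (p t j) k - Gctrl g (p t i) k).
have hpd : forall (t : R) (i : 'I_N) (k : 'I_d), 0 < t -> is_derive t 1 (fun s => p s i k) (Pd t i k).
  move=> t i k t0; have [h1 h2] := hp i k t t0.
  rewrite /Pd -h2 derive1E; exact: derivableP.
set Dot := fun t i j => dotv (fun k => p t i k - p t j k)
   (fun k => Gctrl g (p t i) k - Gctrl g (p t j) k).
set L := fun t : R => \sum_(i < N) \sum_(k < d) p t i k ^+ 2.
have hLd : forall t : R, 0 < t -> is_derive t 1 L
    (- kN * \sum_(i < N) \sum_(j < N) psi (pdist q j i t) * Dot t i j).
  move=> t t0.
  apply: (is_derive_eq (is_derive_sumf (fun i => is_derive_sumf
     (fun k => is_derive_sq (hpd t i k t0))))).
  apply: (@energy_identity R N d (fun i k => p t i k) (fun i k => Gctrl g (p t i) k)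
    (fun j i => psi (pdist q j i t)) kN).
  by move=> i j; rewrite pdist_sym.
have hDot0 : forall (t : R) (i j : 'I_N), 0 <= Dot t i j.
  move=> t i j.
  have := @dot_mono R g d 0 (enorm (p t i) + enorm (p t j)) (p t i) (p t j) (lexx 0) g0.
  rewrite mul0r; apply.
  - by move=> x y /andP[x0 _] /andP[y0 _]; rewrite mul0r; exact: g_monoprod.
  - by rewrite lerDl enorm_ge0.
  - by rewrite lerDr enorm_ge0.
have hL0 : forall t : R, 0 <= L t.
  by move=> t; apply: sumr_ge0 => i _; apply: sumr_ge0 => k _; rewrite sqr_ge0.
have hL'0 : forall t : R, 0 < t -> derive1 L t <= 0.
  move=> t t0; have [_ ->] := is_derive1E (hLd t t0).
  rewrite mulNr oppr_le0; apply: mulr_ge0; first exact: ltW.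
  apply: sumr_ge0 => i _; apply: sumr_ge0 => j _; apply: mulr_ge0 => //.
  by apply: ltW; apply: psipos; apply: pdist_ge0.
have Lnin : forall x y : R, 0 < x -> x <= y -> L y <= L x.
  move=> x y ax xy.
  have hder : forall s : R, x <= s <= y -> derivable L s 1.
    by move=> s /andP[xs _]; have [] := is_derive1E (hLd s (lt_le_trans ax xs)).
  have [z [xz zy E]] := @mvt_gen R L x y hder xy.
  have := hL'0 z (lt_le_trans ax xz).
  have : 0 <= y - x by rewrite subr_ge0.
  move: E; set D := derive1 L z => E yx D0.
  have : D * (y - x) <= 0 by rewrite mulr_le0_ge0.
  lra.
set Rb := Num.sqrt (L 1) + 1.
have Rbp : 0 < Rb by rewrite /Rb; have := sqrtr_ge0 (L 1); lra.
have hpR : forall (t : R) (i : 'I_N), 1 <= t -> enorm (p t i) <= Rb.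
  move=> t i t1; rewrite /Rb /enorm.
  have h1 : \sum_(k < d) p t i k ^+ 2 <= L 1.
    apply: le_trans (Lnin 1 t ltr01 t1).
    rewrite /L (bigD1 i) //= lerDl; apply: sumr_ge0 => j _.
    by apply: sumr_ge0 => k _; rewrite sqr_ge0.
  have := ler_wsqrtr h1; lra.
have [m [mpos hm]] := g_strong hg Rbp.
move=> a b aS bS.
have C0 : 0 <= C by apply: le_trans (hC 0 (lexx 0)); apply: le_trans (pdist_le_Ddiam q 0 aS aS); exact: pdist_ge0.
set fab := fun t : R => dotv (fun k => p t a k - p t b k) (fun k => p t a k - p t b k).
have hL' : forall t : R, 1 < t -> derive1 L t <= - (kN * psi C * m * fab t).
  move=> t t1.
  have t0 : 0 < t by apply: lt_trans t1.
  have [_ ->] := is_derive1E (hLd t t0).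
  have hs : psi C * (m * fab t) <= \sum_(i < N) \sum_(j < N) psi (pdist q j i t) * Dot t i j.
    have hF : forall i j : 'I_N, 0 <= psi (pdist q j i t) * Dot t i j.
      by move=> i j; apply: mulr_ge0 => //; apply: ltW; apply: psipos; apply: pdist_ge0.
    have /= h2 := @sum2_ge_term R N (fun i j => psi (pdist q j i t) * Dot t i j) a b hF.
    apply: le_trans h2.
    apply: ler_pM.
    - by apply: ltW; apply: psipos.
    - by apply: mulr_ge0; [exact: ltW | exact: dotv_ge0].
    - apply: psimono; first exact: pdist_ge0.
      apply: le_trans (hC t (ltW t0)); exact: pdist_le_Ddiam.
    - by apply: (dot_mono (ltW mpos) g0 hm); apply: hpR; apply: ltW.
  have -> : kN * psi C * m * fab t = kN * (psi C * (m * fab t)) by rewrite !mulrA.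
  by rewrite mulNr lerN2; apply: ler_wpM2l hs; apply: ltW.
have hfd : forall t : R, 0 < t -> is_derive t 1 fab
    (\sum_(k < d) 2 * (p t a k - p t b k) * (Pd t a k - Pd t b k)).
  move=> t t0.
  have -> : fab = fun s => \sum_(k < d) (p s a k - p s b k) ^+ 2.
    by apply/funext => s; rewrite /fab /dotv; apply: eq_bigr => k _; rewrite expr2.
  apply: is_derive_sumf => k; apply: is_derive_sq; apply: is_derive_sub; exact: hpd.
set Bp := kN * \sum_(j < N) (Cp * (2 * g Rb)).
have hPd : forall (t : R) (i : 'I_N) (k : 'I_d), 1 <= t -> `|Pd t i k| <= Bp.
  move=> t i k t1; rewrite /Pd normrM (ger0_norm (ltW kNp)); apply: ler_wpM2l; first exact: ltW.
  apply: le_trans (ler_norm_sum _ _ _) _; apply: ler_sum => j _.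
  have ps0 : 0 < psi (pdist q j i t) by apply: psipos; apply: pdist_ge0.
  rewrite normrM (ger0_norm (ltW ps0)).
  apply: ler_pM.
  - exact: ltW.
  - exact: normr_ge0.
  - by apply: hCp; apply: pdist_ge0.
  - apply: le_trans (ler_normB _ _) _.
    have := Gctrl_bound k hg (hpR t j t1); have := Gctrl_bound k hg (hpR t i t1); lra.
set K := \sum_(k < d) 2 * (2 * Rb) * (2 * Bp).
have hf' : forall t : R, 1 < t -> `|derive1 fab t| <= K.
  move=> t t1; have t0 : 0 < t by apply: lt_trans t1.
  have [_ ->] := is_derive1E (hfd t t0).
  apply: le_trans (ler_norm_sum _ _ _) _; apply: ler_sum => k _.
  rewrite normrM normrM (ger0_norm (ler0n _ 2)) -mulrA -[2 * (2 * Rb) * _]mulrA.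
  apply: ler_wpM2l => //.
  apply: ler_pM; [exact: normr_ge0 | exact: normr_ge0 | | ].
  - apply: le_trans (ler_normB _ _) _.
    have := le_trans (comp_le_enorm (p t a) k) (hpR t a (ltW t1)).
    have := le_trans (comp_le_enorm (p t b) k) (hpR t b (ltW t1)).
    lra.
  - apply: le_trans (ler_normB _ _) _.
    have := hPd t a k (ltW t1); have := hPd t b k (ltW t1); lra.
have psC : 0 < psi C by apply: psipos.
have cpos : 0 < kN * psi C * m by rewrite mulr_gt0 // mulr_gt0.
apply: (@barbalat R L fab 1 (kN * psi C * m) K cpos).
- by move=> t t1; have [] := is_derive1E (hLd t (lt_trans ltr01 t1)).
- exact: hL'.
- by move=> t _; exact: hL0.
- by move=> t _; exact: dotv_ge0.
- by move=> t t1; have [] := is_derive1E (hfd t (lt_trans ltr01 t1)).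
- exact: hf'.
Qed.

Lemma cluster_align (R : realType) (N d : nat) (kappa : R) (g psi : R -> R)
  (q p : R -> 'I_N -> 'I_d -> R) (S : {set 'I_N}) (C : R) :
  (0 < N)%N -> 0 < kappa -> admissible_g g -> admissible_psi psi ->
  CS_solution kappa g psi q p ->
  (forall t, 0 <= t -> Ddiam q S t <= C) ->
  Ddiam p S t @[t --> +oo] --> 0.
Proof.
move=> N0 kpos hg hpsi hsol hC.
apply/cvgrPdist_lt => e e0.
have key : forall ij : 'I_N * 'I_N, \forall t \near +oo,
    (ij.1 \in S -> ij.2 \in S -> pdist p ij.1 ij.2 t < e).
  move=> [i j] /=.
  have [iS|iS] := boolP (i \in S); last by apply: filterE.
  have [jS|jS] := boolP (j \in S); last by apply: filterE.
  have e2 : 0 < e ^+ 2 by rewrite exprn_gt0.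
  have [T hT] := cluster_pair N0 kpos hg hpsi hsol hC iS jS e2.
  apply: filterS (nbhs_pinfty_ge (num_real T)) => t Tt _ _.
  rewrite /pdist enormE -(ger0_norm (ltW e0)) -sqrtr_sqr ltr_sqrt //.
  exact: hT.
have := @filter_forall R _ _ (pinfty_nbhs R) (@filter_filter R _ proper_pinfty_nbhs) key.
move=> H0; move: H0.
apply: (@filterS R (pinfty_nbhs R) (@filter_filter R _ proper_pinfty_nbhs)) => t /= H.
have D0 : 0 <= Ddiam p S t by apply: bigmax_ge_id.
rewrite sub0r normrN ger0_norm //.
rewrite /Ddiam; apply: bigmax_lt => // i iS; apply: bigmax_lt => // j jS.
exact: (H (i, j) iS jS).
Qed.

Theorem proposition2p2 (R : realType) (N d : nat) (kappa : R) (g psi : R -> R)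
  (q p : R -> 'I_N -> 'I_d -> R) :
  (2 <= N)%N -> (1 <= d)%N -> 0 < kappa ->
  admissible_g g -> admissible_psi psi ->
  CS_solution kappa g psi q p ->
  (bicluster_flocking q p <->
   exists A B : {set 'I_N},
     [/\ A :|: B = [set: 'I_N]%SET, A :&: B = finset.set0, A != finset.set0 /\ B != finset.set0,
         (exists C : R, forall t : R, 0 <= t ->
            Order.max (Ddiam q A t) (Ddiam q B t) <= C)
       & (forall M : R, exists t : R, 0 <= t /\
            forall i j, i \in A -> j \in B -> M < pdist q i j t)]).
Proof.
move=> N2 d1 kpos hg hpsi hsol; split.
  case=> S [S0 ST [[C hC] hsep] _ _].
  exists S, (~: S); split.
  - exact: finset.setUCr.
  - exact: finset.setICr.
  - split => //; apply/negP => /eqP h; move: ST; rewrite -(finset.setCK S) h finset.setC0 eqxx.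
    by [].
  - by exists C.
  - move=> M; have [t [t0 ht]] := hsep M; exists t; split => // i j iS jS.
    by apply: ht => //; rewrite -finset.in_setC.
case=> A [B [hU hI [A0 B0] [C hC] hsep]].
have HB : B = ~: A.
  apply/finset.setP => x; rewrite inE.
  have h1 : x \in A :|: B by rewrite hU inE.
  have h2 : x \notin A :&: B by rewrite hI inE.
  move: h1 h2; rewrite !inE; case: (x \in A); case: (x \in B) => //.
have N0 : (0 < N)%N by apply: leq_trans N2.
exists A; split => //.
- apply/negP => /eqP h; move: B0; rewrite HB h finset.setCT eqxx; by [].
- split; first by exists C; rewrite -HB.
  move=> M; have [t [t0 ht]] := hsep M; exists t; split => // i j iA jA.
  by apply: ht => //; rewrite HB inE.
- apply: (@cluster_align R N d kappa g psi q p A C N0 kpos hg hpsi hsol).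
  by move=> t t0; apply: le_trans (hC t t0); rewrite le_max lexx.
- apply: (@cluster_align R N d kappa g psi q p (~: A) C N0 kpos hg hpsi hsol).
  by move=> t t0; apply: le_trans (hC t t0); rewrite -HB le_max lexx orbT.
Qed.
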